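(* Let $\mathcal{L}$ be the Laplace operator on the real Euclidean space of $d\times d$ Hermitian matrices $M=(z_{ij})$ endowed with the inner product $\langle A,B\rangle=\mathrm{trace}(AB)$ (the generator of a Brownian Hermitian matrix), with carré du champ $\Gamma$ (extended complex-bilinearly to complex-valued functions), so that $\mathcal{L}(z_{ij})=0$. Let $P(X)=\det(X\,\mathrm{Id}-M)$. Then $$\Gamma\big(P(X),P(Y)\big)=\frac{1}{Y-X}\big(P'(X)P(Y)-P'(Y)P(X)\big),\qquad \mathcal{L}\big(P(X)\big)=-P''(X).$$
   Context: The carré du champ of a diffusion operator $\mathcal{L}$ is $\Gamma(f,g)=\frac12\big(\mathcal{L}(fg)-f\mathcal{L}g-g\mathcal{L}f\big)$. For this Laplacian one has $\Gamma(z_{ij},z_{kl})=\delta_{il}\delta_{jk}$ and $\Gamma(z_{ij},\bar z_{kl})=\delta_{ik}\delta_{jl}$. Derivatives $P'$, $P''$ are with respect to $X$. *)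

(* Defs.v *)
From HB Require Import structures.
From mathcomp Require Import all_boot all_order all_algebra all_field.
From mathcomp Require Import mpoly.
Set Implicit Arguments. Unset Strict Implicit. Unset Printing Implicit Defensive.
Import Order.TTheory GRing.Theory Num.Theory.
Local Open Scope ring_scope.

(* Complex-valued polynomial functions of the d*d real coordinates of a
   d x d Hermitian matrix.  Coordinate conventions (variable index
   mxvec_index i j):
     - (i,i)        : the real diagonal entry x_ii = z_ii,
     - (i,j), i<j   : real part of z_ij,
     - (j,i), i<j   : imaginary part of z_ij.                              *)
Definition HFun (d : nat) := {mpoly algC[d * d]}.

Definition hvar (d : nat) (i j : 'I_d) : HFun d := 'X_(mxvec_index i j).

Definition herm_coord (d : nat) : 'M[HFun d]_d :=
  \matrix_(i, j)
    if i == j then hvar i i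
    else if (i < j)%N then hvar i j + 'i%:MP * hvar j i
    else hvar j i - 'i%:MP * hvar i j.

(* Laplacian for the inner product <A,B> = tr(AB):  in these coordinates
   |M|^2 = sum x_ii^2 + 2 sum_{i<j} (a_ij^2 + b_ij^2), hence
   L = sum_i d^2/dx_ii^2 + 1/2 sum_{i<j} (d^2/da_ij^2 + d^2/db_ij^2). *)
Definition hlap (d : nat) (f : HFun d) : HFun d :=
  \sum_(i < d) \sum_(j < d)
     (if i == j then 1 else 2^-1 : algC) *:
       mderiv (mxvec_index i j) (mderiv (mxvec_index i j) f).

Definition hGamma (d : nat) (f g : HFun d) : HFun d :=
  (2^-1 : algC) *: (hlap (f * g) - f * hlap g - g * hlap f).

Definition charP (d : nat) : {poly HFun d} := char_poly (herm_coord d).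

(* Main.v *)
Require Import Defs.
From HB Require Import structures.
From mathcomp Require Import all_boot all_order all_algebra all_field.
From mathcomp Require Import mpoly.
From mathcomp Require Import perm ring zify.
Import Order.TTheory GRing.Theory Num.Theory.
Local Open Scope ring_scope.

Module Aux.
Set Implicit Arguments. Unset Strict Implicit. Unset Printing Implicit Defensive.

Section Derivation.
Variable R : comNzRingType.
Variable D : {additive R -> R}.
Hypothesis DM : forall a b, D (a * b) = D a * b + a * D b.

Lemma D1 : D 1 = 0.
Proof.
have := DM 1 1; rewrite !mul1r mulr1 => h.
by apply: (@addrI _ (D 1)); rewrite -h addr0.
Qed.

Lemma D_sign (b : bool) : D ((-1) ^+ b) = 0.
Proof. by case: b; rewrite ?expr0 ?expr1 ?raddfN D1 ?oppr0. Qed.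

Lemma D_prod_seq (I : eqType) (r : seq I) (F : I -> R) : uniq r ->
  D (\prod_(k <- r) F k) = \sum_(i <- r) D (F i) * \prod_(k <- r | i != k) F k.
Proof.
elim: r => [|a r IH] /=; first by rewrite !big_nil D1.
move/andP=> [anr ur]; rewrite big_cons DM IH // big_cons big_cons eqxx /=.
have -> : \prod_(k <- r | a != k) F k = \prod_(k <- r) F k.
  rewrite big_mkcond; apply: eq_big_seq => k kr.
  by have -> : a != k by apply: contraNneq anr => ->.
congr (_ + _); rewrite mulr_sumr; apply: eq_big_seq => i ir.
rewrite big_cons; have -> : (i != a) by apply: contraNneq anr => <-.
by rewrite mulrCA.
Qed.

Lemma D_prod (I : finType) (F : I -> R) :
  D (\prod_i F i) = \sum_i D (F i) * \prod_(k | i != k) F k.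
Proof. by apply: D_prod_seq; exact: index_enum_uniq. Qed.

Lemma D_det n (A : 'M[R]_n) :
  D (\det A) = \tr (\adj A *m map_mx D A).
Proof.
rewrite /(\det A) raddf_sum.
under eq_bigr => s _ do rewrite DM D_sign mul0r add0r D_prod mulr_sumr.
rewrite exchange_big /= /mxtrace.
transitivity (\sum_i \sum_j D (A i j) * cofactor A i j).
  apply: eq_bigr => i _.
  rewrite (partition_big (fun s : 'S_n => s i) predT) //=.
  apply: eq_bigr => j _; rewrite expand_cofactor big_distrr /=.
  apply: eq_bigr => s /eqP <-; rewrite mulrCA //.
rewrite exchange_big /=; apply: eq_bigr => i _; rewrite mxE; apply: eq_bigr => j _.
by rewrite !mxE mulrC.
Qed.

Lemma map_mxM_D m n p (A : 'M[R]_(m, n)) (B : 'M[R]_(n, p)) :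
  map_mx D (A *m B) = map_mx D A *m B + A *m map_mx D B.
Proof.
apply/matrixP => i j; rewrite !mxE raddf_sum -big_split; apply: eq_bigr => k _.
by rewrite !mxE DM.
Qed.

Lemma map_D_scalar n (a : R) : map_mx D (a%:M : 'M_n) = (D a)%:M.
Proof. by apply/matrixP => i j; rewrite !mxE raddfMn. Qed.

Lemma tr_map n (A : 'M[R]_n) : \tr (map_mx D A) = D (\tr A).
Proof. by rewrite raddf_sum; apply: eq_bigr => i _; rewrite mxE. Qed.

Lemma D2_det n (C E : 'M[R]_n) : map_mx D C = E -> map_mx D E = 0 ->
  \det C * D (D (\det C)) =
    \tr (\adj C *m E) ^+ 2 - \tr (\adj C *m E *m \adj C *m E).
Proof.
move=> hC hE.
have key : \det C *: map_mx D (\adj C) =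
    \tr (\adj C *m E) *: \adj C - \adj C *m E *m \adj C.
  have h1 := congr1 (map_mx D) (mul_adj_mx C).
  rewrite map_mxM_D map_D_scalar D_det hC in h1.
  have h2 := congr1 (mulmx^~ (\adj C)) h1; rewrite /= in h2.
  rewrite mulmxDl -mulmxA mul_mx_adj mul_mx_scalar mul_scalar_mx in h2.
  by rewrite -h2 addrK.
rewrite D_det hC -tr_map map_mxM_D hE mulmx0 addr0 -mxtraceZ scalemxAl key.
by rewrite mulmxBl -scalemxAl raddfB /= mxtraceZ expr2.
Qed.
End Derivation.

Section H.
Variable d : nat.
Local Notation HF := (HFun d).
Local Notation mvi := (@mxvec_index d d).

Lemma mvi_eq (a b k l : 'I_d) : (mvi a b == mvi k l) = (a == k) && (b == l).
Proof.
by rewrite /mxvec_index (inj_eq (@cast_ord_inj _ _ _)) (inj_eq (@enum_rank_inj _)).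
Qed.

Lemma mderivXU (v j : 'I_(d * d)) : mderiv v ('X_j : HF) = (v == j)%:R.
Proof.
rewrite mderivX mnm1E; case: eqVneq => [->|ne]; last first.
  by rewrite scale0r.
have -> : (U_(v) - U_(v))%MM = 0%MM by apply/mnmP => i; rewrite mnmBE subnn mnm0E.
by rewrite mpolyX0 scale1r.
Qed.

Lemma mderiv_hvar v (k l : 'I_d) : mderiv v (hvar k l) = (v == mvi k l)%:R.
Proof. exact: mderivXU. Qed.

Ltac crush_eq :=
  repeat match goal with
  | H : is_true (?x != ?x) |- _ => by rewrite eqxx in H
  | |- context[?x == ?y :> 'I_ _] =>
    let ne := fresh "ne" in
    have [?|ne] := eqVneq x y;
      [subst; rewrite ?eqxx /= | rewrite ?(negbTE ne); rewrite eq_sym in ne; rewrite ?(negbTE ne) /=]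
  end.

Ltac natify :=
  repeat match goal with
  | H : is_true (?x != ?y :> 'I_ _) |- _ =>
    move: H; rewrite -(inj_eq val_inj) /= => ?
  end.

Definition Emx (a b : 'I_d) : 'M[HF]_d :=
  if a == b then delta_mx a a
  else if (a < b)%N then delta_mx a b + delta_mx b a
  else 'i%:MP *: (delta_mx b a - delta_mx a b).

Lemma dM (a b : 'I_d) : map_mx (mderiv (mvi a b)) (herm_coord d) = Emx a b.
Proof.
apply/matrixP => k l; rewrite /herm_coord !mxE.
rewrite !(fun_if (mderiv (mvi a b))) !(mderivD, mderivB, mderivN, mderiv_mulC, mderiv_hvar, mvi_eq).
rewrite /Emx; case: (eqVneq a b) => [<-|nab]; rewrite ?mxE.
  by crush_eq; natify; rewrite ?mulr0 ?addr0 ?subr0 //; case: ifP; try lia.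
have [hab|hab] := boolP (a < b)%N; rewrite ?hab ?(negbTE hab) !mxE; crush_eq.
all: natify; try (case: ifP => ?; try lia).
all: by rewrite ?(mulr0, mulr1, subrr, addr0, add0r, sub0r, subr0, mulrN1, oppr0).
Qed.

Lemma map_mderiv_delta v (a b : 'I_d) : map_mx (mderiv v) (delta_mx a b : 'M[HF]_d) = 0.
Proof. by apply/matrixP => k l; rewrite !mxE -mpolyC_nat mderivC. Qed.

Lemma map_mderiv_Emx v (a b : 'I_d) : map_mx (mderiv v) (Emx a b) = 0.
Proof.
rewrite /Emx; case: ifP => _; first exact: map_mderiv_delta.
case: ifP => _; apply/matrixP => k l; rewrite !mxE ?mderiv_mulC ?(mderivD, mderivB, mderivN);
  by rewrite -!mpolyC_nat !mderivC ?(subrr, addr0, add0r, oppr0, mulr0).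
Qed.
End H.

Section Tr.
Variable R : comNzRingType.
Variable n : nat.
Implicit Types P Q : 'M[R]_n.

Lemma mul_delta_entry P (a b i j : 'I_n) : (P *m delta_mx a b) i j = P i a * (j == b)%:R.
Proof.
rewrite mxE (bigD1 a) //= big1 ?addr0; first by rewrite mxE eqxx.
by move=> k nk; rewrite mxE (negbTE nk) mulr0.
Qed.

Lemma tr_delta P (a b : 'I_n) : \tr (P *m delta_mx a b) = P b a.
Proof.
rewrite /mxtrace (bigD1 b) //= big1 ?addr0; first by rewrite mul_delta_entry eqxx mulr1.
by move=> i ni; rewrite mul_delta_entry (negbTE ni) mulr0.
Qed.

Lemma tr_delta2 P Q (a b c e : 'I_n) :
  \tr (P *m delta_mx a b *m Q *m delta_mx c e) = P e a * Q b c.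
Proof.
rewrite tr_delta mxE (bigD1 b) //= big1 ?addr0; first by rewrite mul_delta_entry eqxx mulr1.
by move=> k nk; rewrite mul_delta_entry (negbTE nk) mulr0 mul0r.
Qed.

Lemma tr_scale1 P (c : R) (F : 'M[R]_n) : \tr (P *m (c *: F)) = c * \tr (P *m F).
Proof. by rewrite -scalemxAr mxtraceZ. Qed.

Lemma tr_scale2 P Q (c : R) (F : 'M[R]_n) :
  \tr (P *m (c *: F) *m Q *m (c *: F)) = c * c * \tr (P *m F *m Q *m F).
Proof. by rewrite -!scalemxAr -!scalemxAl !mxtraceZ mulrA. Qed.

Lemma tr_exp_plus P Q (x y : 'M[R]_n) :
  \tr (P *m (x + y) *m Q *m (x + y)) =
  \tr (P *m x *m Q *m x) + \tr (P *m x *m Q *m y)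
  + \tr (P *m y *m Q *m x) + \tr (P *m y *m Q *m y).
Proof. rewrite !(mulmxDr, mulmxDl, mxtraceD); ring. Qed.

Lemma tr_exp_minus P Q (x y : 'M[R]_n) :
  \tr (P *m (x - y) *m Q *m (x - y)) =
  \tr (P *m x *m Q *m x) - \tr (P *m x *m Q *m y)
  - \tr (P *m y *m Q *m x) + \tr (P *m y *m Q *m y).
Proof.
rewrite !(mulmxBr, mulmxBl, raddfB) /=; ring.
Qed.

Lemma tr_pp P Q (a b : 'I_n) :
  \tr (P *m (delta_mx a b + delta_mx b a) *m Q *m (delta_mx a b + delta_mx b a)) =
  P b a * Q b a + P a a * Q b b + P b b * Q a a + P a b * Q a b.
Proof. by rewrite tr_exp_plus !tr_delta2. Qed.

Lemma tr_mm P Q (a b : 'I_n) :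
  \tr (P *m (delta_mx a b - delta_mx b a) *m Q *m (delta_mx a b - delta_mx b a)) =
  P b a * Q b a - P a a * Q b b - P b b * Q a a + P a b * Q a b.
Proof. by rewrite tr_exp_minus !tr_delta2. Qed.
End Tr.

Section H2.
Variable d : nat.
Local Notation HF := (HFun d).

Definition cf (a b : 'I_d) : algC := if a == b then 1 else 2^-1.

Lemma half_sc (x y : HF) : x = y *+ 2 -> (2^-1 : algC) *: x = y.
Proof.
move=> ->; rewrite -scaler_nat scalerA mulVf ?scale1r //.
by rewrite pnatr_eq0.
Qed.

Lemma sym_sum (F G : 'I_d -> 'I_d -> HF) :
  (forall a b, F a b + F b a = G a b + G b a) ->
  \sum_a \sum_b F a b = \sum_a \sum_b G a b.
Proof.
move=> h.
have e : forall H : 'I_d -> 'I_d -> HF,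
    (\sum_a \sum_b H a b) *+ 2 = \sum_a \sum_b (H a b + H b a).
  move=> H; rewrite mulr2n {2}exchange_big /= -big_split /=.
  by apply: eq_bigr => a _; rewrite -big_split.
rewrite -(half_sc (erefl ((\sum_a \sum_b F a b) *+ 2))).
rewrite -(half_sc (erefl ((\sum_a \sum_b G a b) *+ 2))) !e.
by congr (_ *: _); apply: eq_bigr => a _; apply: eq_bigr => b _.
Qed.

Lemma id1 (R : comNzRingType) (p1 p2 q1 q2 : R) :
  (p1 + p2) * (q1 + q2) - (p1 - p2) * (q1 - q2) = (p2 * q1 + p1 * q2) *+ 2.
Proof. ring. Qed.

Lemma II : 'i%:MP * 'i%:MP = -1 :> HF.
Proof. by rewrite -mpolyCM mulCii raddfN /= mpolyC1. Qed.

Lemma ringI (R : comNzRingType) (I x y : R) : I * I = -1 -> (I * x) * (I * y) = - (x * y).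
Proof. by move=> h; rewrite mulrACA h mulN1r. Qed.

Lemma C1 (P Q : 'M[HF]_d) :
  \sum_a \sum_b cf a b *: (\tr (P *m Emx a b) * \tr (Q *m Emx a b)) = \tr (P *m Q).
Proof.
have -> : \tr (P *m Q) = \sum_a \sum_b P a b * Q b a.
  by apply: eq_bigr => a _; rewrite mxE.
apply: sym_sum => a b.
case: (eqVneq a b) => [<-|nab]; first by rewrite /cf /Emx eqxx !tr_delta scale1r.
wlog hab : a b nab / (a < b)%N.
  move=> W; have [h|h|h] := ltngtP a b; first exact: W.
    by rewrite addrC [RHS]addrC; apply: W => //; rewrite eq_sym.
  by move: nab; rewrite (ord_inj h) eqxx.
have nba : b != a by rewrite eq_sym.
have hba : (b < a)%N = false by rewrite ltnNge ltnW.
rewrite /cf /Emx (negbTE nab) (negbTE nba) hab hba.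
rewrite !(mulmxDr, mulmxBr, mulmxN, tr_scale1, mxtraceD, raddfB, raddfN) /= !tr_delta.
rewrite -scalerDr; apply: half_sc.
rewrite ringI ?II //.
move: (P b a) (P a b) (Q b a) (Q a b) => p1 p2 q1 q2; ring.
Qed.

Lemma C2 (P Q : 'M[HF]_d) :
  \sum_a \sum_b cf a b *: \tr (P *m Emx a b *m Q *m Emx a b) = \tr P * \tr Q.
Proof.
have -> : \tr P * \tr Q = \sum_a \sum_b P a a * Q b b.
  by rewrite mulr_suml; apply: eq_bigr => a _; rewrite mulr_sumr.
apply: sym_sum => a b.
case: (eqVneq a b) => [<-|nab]; first by rewrite /cf /Emx eqxx !tr_delta2 scale1r.
wlog hab : a b nab / (a < b)%N.
  move=> W; have [h|h|h] := ltngtP a b; first exact: W.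
    by rewrite addrC [RHS]addrC; apply: W => //; rewrite eq_sym.
  by move: nab; rewrite (ord_inj h) eqxx.
have nba : b != a by rewrite eq_sym.
have hba : (b < a)%N = false by rewrite ltnNge ltnW.
rewrite /cf /Emx (negbTE nab) (negbTE nba) hab hba.
rewrite [X in _ + _ *: X]tr_scale2 II mulN1r.
rewrite [X in _ + _ *: - X]tr_mm [X in _ *: X + _]tr_pp.
rewrite -scalerDr; apply: half_sc.
move: (P b a) (Q b a) (P a a) (Q b b) (P b b) (Q a a) (P a b) (Q a b).
by move=> ? ? ? ? ? ? ? ?; ring.
Qed.
End H2.

Lemma negE_tr (R : comNzRingType) n (P E : 'M[R]_n) :
  \tr (P *m - E) ^+ 2 - \tr (P *m - E *m P *m - E) =
  \tr (P *m E) ^+ 2 - \tr (P *m E *m P *m E).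
Proof. by rewrite !mulmxN !mulNmx opprK (raddfN (@mxtrace _ n)) sqrrN. Qed.

Section H3.
Variable d : nat.
Local Notation HF := (HFun d).
Local Notation mvi := (@mxvec_index d d).
Local Notation D a b := (mderiv (mvi a b)).

Lemma dsum_mul (f : HF) (F : 'I_d -> 'I_d -> HF) :
  f * \sum_a \sum_b F a b = \sum_a \sum_b f * F a b.
Proof. by rewrite mulr_sumr; apply: eq_bigr => a _; rewrite mulr_sumr. Qed.

Lemma dsumB (F G : 'I_d -> 'I_d -> HF) :
  \sum_a \sum_b F a b - \sum_a \sum_b G a b = \sum_a \sum_b (F a b - G a b).
Proof. by rewrite -sumrB; apply: eq_bigr => a _; rewrite sumrB. Qed.

Lemma hGamma_sum (f g : HF) :
  hGamma f g = \sum_a \sum_b cf a b *: (D a b f * D a b g).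
Proof.
rewrite /hGamma; apply: half_sc; rewrite /hlap !dsum_mul !dsumB -sumrMnl.
apply: eq_bigr => a _; rewrite -sumrMnl; apply: eq_bigr => b _.
rewrite -!scalerAr -!scalerBr scalerMnr; congr (_ *: _).
rewrite mderivM mderivD !mderivM.
move: (D a b (D a b f)) (D a b (D a b g)) (D a b f) (D a b g) => x y z w.
by ring.
Qed.

Definition Amx (x : HF) : 'M[HF]_d := x%:M - herm_coord d.

Lemma tr_morph (R S : nzRingType) (f : {additive R -> S}) n (A : 'M[R]_n) :
  f (\tr A) = \tr (map_mx f A).
Proof. by rewrite raddf_sum; apply: eq_bigr => i _; rewrite mxE. Qed.

Lemma map_char (x : HF) :
  map_mx (horner_eval x) (char_poly_mx (herm_coord d)) = Amx x.
Proof.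
apply/matrixP => i j; rewrite !mxE horner_evalE.
by rewrite hornerD hornerN hornerMn hornerX hornerC.
Qed.

Lemma charP_eval (x : HF) : (charP d).[x] = \det (Amx x).
Proof. by rewrite /charP /char_poly -horner_evalE -det_map_mx map_char. Qed.

Lemma map_deriv_cpm :
  map_mx deriv (char_poly_mx (herm_coord d)) = 1%:M.
Proof.
apply/matrixP => i j; rewrite !mxE.
by rewrite derivB derivMn derivX derivC subr0.
Qed.

Lemma deriv_char : (charP d)^`() = \tr (\adj (char_poly_mx (herm_coord d))).
Proof.
by rewrite /charP /char_poly (D_det (@derivM _)) map_deriv_cpm mulmx1.
Qed.

Lemma deriv2_char :
  charP d * (charP d)^`(2) =
  \tr (\adj (char_poly_mx (herm_coord d))) ^+ 2
  - \tr (\adj (char_poly_mx (herm_coord d)) *m \adj (char_poly_mx (herm_coord d))).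
Proof.
have h := D2_det (@derivM _) map_deriv_cpm.
rewrite !mulmx1 in h; rewrite -h; last first.
  by apply/matrixP => i j; rewrite !mxE /= -polyC_natr derivC.
done.
Qed.

Lemma deriv_eval (x : HF) : (charP d)^`().[x] = \tr (\adj (Amx x)).
Proof. by rewrite deriv_char -horner_evalE tr_morph map_mx_adj map_char. Qed.

Lemma deriv2_eval (x : HF) :
  \det (Amx x) * (charP d)^`(2).[x] =
  \tr (\adj (Amx x)) ^+ 2 - \tr (\adj (Amx x) *m \adj (Amx x)).
Proof.
rewrite -charP_eval -hornerM deriv2_char -horner_evalE rmorphB rmorphXn /=.
by rewrite !tr_morph map_mxM map_mx_adj map_char.
Qed.

Lemma map_D_Amx (c : algC) (a b : 'I_d) :
  map_mx (mderiv (mvi a b)) (Amx c%:MP) = - Emx a b.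
Proof.
apply/matrixP => i j; rewrite -dM !mxE mderivB mderivMn mderivC mul0rn sub0r.
done.
Qed.

Lemma map_D_nEmx (a b : 'I_d) v : map_mx (mderiv v) (- Emx a b) = 0.
Proof. by rewrite map_mxN map_mderiv_Emx oppr0. Qed.

Lemma detA_D (c : algC) (a b : 'I_d) :
  D a b (\det (Amx c%:MP)) = - \tr (\adj (Amx c%:MP) *m Emx a b).
Proof.
by rewrite (D_det (@mderivM _ _ (mvi a b))) map_D_Amx mulmxN raddfN.
Qed.

Lemma detA_DD (c : algC) (a b : 'I_d) :
  \det (Amx c%:MP) * D a b (D a b (\det (Amx c%:MP))) =
  \tr (\adj (Amx c%:MP) *m Emx a b) ^+ 2
  - \tr (\adj (Amx c%:MP) *m Emx a b *m \adj (Amx c%:MP) *m Emx a b).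
Proof.
have h := D2_det (@mderivM _ _ (mvi a b)) (map_D_Amx c a b) (map_D_nEmx a b _).
exact: (etrans h (negE_tr _ _)).
Qed.

Lemma hlapE (f : HF) : hlap f = \sum_a \sum_b cf a b *: D a b (D a b f).
Proof. by []. Qed.

Lemma hlap_det (c : algC) :
  \det (Amx c%:MP) * hlap (\det (Amx c%:MP)) =
  \tr (\adj (Amx c%:MP) *m \adj (Amx c%:MP)) - \tr (\adj (Amx c%:MP)) ^+ 2.
Proof.
rewrite hlapE dsum_mul.
under eq_bigr => a _ do under eq_bigr => b _ do rewrite -scalerAr detA_DD scalerBr expr2.
rewrite -dsumB C1 C2 expr2.
done.
Qed.

Lemma hGamma_det (c e : algC) :
  hGamma (\det (Amx c%:MP)) (\det (Amx e%:MP)) =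
  \tr (\adj (Amx c%:MP) *m \adj (Amx e%:MP)).
Proof.
rewrite hGamma_sum -C1; apply: eq_bigr => a _; apply: eq_bigr => b _.
by rewrite !detA_D mulrNN.
Qed.

Lemma notdiag (i j : 'I_d) : i != j -> [exists l, mvi i j == mvi l l] = false.
Proof.
move=> ne; apply/negbTE/existsPn => l; rewrite mvi_eq.
by apply/negP => /andP [/eqP e1 /eqP e2]; move: ne; rewrite e1 e2 eqxx.
Qed.

Lemma detA_neq0 (X : algC) : \det (Amx X%:MP) != 0.
Proof.
pose v : 'I_(d * d) -> algC := fun k => if [exists l, k == mvi l l] then X - 1 else 0.
have h : meval v (\det (Amx X%:MP)) = 1.
  rewrite -det_map_mx.
  have -> : map_mx (meval v) (Amx X%:MP) = 1%:M.
    apply/matrixP => i j; rewrite !mxE mevalB mevalMn mevalC.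
    case: (eqVneq i j) => [_|ne].
      rewrite /hvar mevalXU /v.
      have -> : [exists l, mvi i i == mvi l l] by apply/fintype.existsP; exists i.
      by rewrite mulr1n opprB addrC subrK.
    have ne' : j != i by rewrite eq_sym.
    case: ifP => _; rewrite ?(mevalD, mevalB, mevalN, mevalM, mevalC) /hvar !mevalXU /v;
      by rewrite !notdiag // ?(mulr0, addr0, add0r, subr0, oppr0, mulr0n, sub0r).
  by rewrite det1.
by apply/eqP => e; move: h; rewrite e meval0 => /eqP; rewrite eq_sym oner_eq0.
Qed.
End H3.

Lemma tr_key (R : comNzRingType) n (c dA dB : R) (P Q M : 'M[R]_n) :
  c *: M = dB *: P - dA *: Q -> c * \tr M = \tr P * dB - \tr Q * dA.
Proof.
move/(congr1 (@mxtrace _ _)); rewrite mxtraceZ raddfB /= !mxtraceZ => ->.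
by rewrite [dB * _]mulrC [dA * _]mulrC.
Qed.

End Aux.
Import Aux.

Theorem proposition5p5 (d : nat) (X Y : algC) :
  X != Y ->
  hGamma (charP d).[X%:MP] (charP d).[Y%:MP] =
    (Y - X)^-1 *: ((charP d)^`().[X%:MP] * (charP d).[Y%:MP]
                   - (charP d)^`().[Y%:MP] * (charP d).[X%:MP])
  /\ hlap (charP d).[X%:MP] = - (charP d)^`(2).[X%:MP].
Proof.
move=> nXY; split.
  rewrite !charP_eval !deriv_eval hGamma_det.
  set A := Amx X%:MP; set B := Amx Y%:MP.
  have eBA : B - A = ((Y - X)%:MP)%:M.
    by rewrite /B /A /Amx opprB addrA subrK mpolyCB (raddfB (@scalar_mx _ d)).
  have key : (Y - X)%:MP * \tr (\adj A *m \adj B) =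
      \tr (\adj A) * \det B - \tr (\adj B) * \det A.
    have h : \adj A *m (B - A) *m \adj B = \det B *: \adj A - \det A *: \adj B.
      rewrite mulmxBr mulmxBl -mulmxA mul_mx_adj mul_mx_scalar.
      by rewrite mul_adj_mx mul_scalar_mx.
    rewrite eBA mul_mx_scalar -scalemxAl in h.
    exact: tr_key h.
  rewrite -key -mul_mpolyC mulrA -mpolyCM mulVf ?mpolyC1 ?mul1r //.
  by rewrite subr_eq0 eq_sym.
apply: (mulfI (detA_neq0 d X)).
rewrite charP_eval hlap_det mulrN deriv2_eval opprB.
done.
Qed.
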